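(* Let $\Gamma$ be a distance-regular graph with diameter $D\ge3$ and intersection number $a_1\ne0$. Let $\sigma_0,\dots,\sigma_D$ and $\rho_0,\dots,\rho_D$ be nontrivial pseudo cosine sequences forming a tight pair, and let $\varepsilon$ be the corresponding auxiliary parameter. Then $\varepsilon\notin\{1,-1\}$, and $\sigma_{i-1}\ne\sigma_i$ and $\rho_{i-1}\ne\rho_i$ for $1\le i\le D$.
   Context: $\Gamma$ is a finite connected undirected graph without loops or multiple edges, distance-regular with diameter $D$, intersection numbers $a_i,b_i,c_i$ ($c_0=0$, $b_D=0$), valency $k$, $c_i+a_i+b_i=k$. For $\theta\in\mathbb{R}$ the pseudo cosine sequence for $\theta$ is the sequence of reals $\sigma_0,\dots,\sigma_D$ with $\sigma_0=1$ and $c_i\sigma_{i-1}+a_i\sigma_i+b_i\sigma_{i+1}=\theta\sigma_i$ for $0\le i\le D-1$; nontrivial means $\sigma_1\ne1$. Pseudo cosine sequences $\sigma_i$, $\rho_i$ form a tight pair if $(\sigma_i\rho_i)_{i=0}^D$ is a pseudo cosine sequence. For a tight pair of nontrivial pseudo cosine sequences, an auxiliary parameter is a real $\varepsilon$ with $\sigma_i\rho_i-\sigma_{i-1}\rho_{i-1}=\varepsilon(\sigma_{i-1}\rho_i-\sigma_i\rho_{i-1})$ for $1\le i\le D$ (if $\sigma_1\ne\rho_1$ it is unique, equal to $(\sigma_1\rho_1-1)/(\rho_1-\sigma_1)$). *)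

(* Defs.v *)
From HB Require Import structures.
From mathcomp Require Import all_boot all_order all_algebra.
From mathcomp Require Import reals.
Set Implicit Arguments. Unset Strict Implicit. Unset Printing Implicit Defensive.
Import Order.TTheory GRing.Theory Num.Theory.
Local Open Scope ring_scope.

Fixpoint within (T : finType) (adj : rel T) (n : nat) (x y : T) : bool :=
  match n with
  | 0 => x == y
  | n'.+1 => within adj n' x y || [exists z, adj x z && within adj n' z y]
  end.

Definition connected_graph (T : finType) (adj : rel T) : Prop :=
  forall x y : T, exists n, within adj n x y.

(* Path-length distance: least n with a walk of length <= n
   (in a connected graph this is attained below #|T|). *)
Definition gdist (T : finType) (adj : rel T) (x y : T) : nat :=
  find (fun n => within adj n x y) (iota 0 #|T|).

Definition diameter (T : finType) (adj : rel T) : nat :=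
  (\max_(x : T) \max_(y : T) gdist adj x y)%N.

Definition distance_regular (T : finType) (adj : rel T) (D : nat)
    (a b c : nat -> nat) : Prop :=
  [/\ symmetric adj, irreflexive adj, connected_graph adj,
      diameter adj = D &
      forall x y : T, let i := gdist adj x y in
        [/\ #|[set z | adj y z & (gdist adj x z).+1 == i]| = c i,
            #|[set z | adj y z & gdist adj x z == i]| = a i &
            #|[set z | adj y z & gdist adj x z == i.+1]| = b i]].

(* Pseudo cosine sequence for theta (only sigma_0..sigma_D matter). *)
Definition pseudo_cosine (R : realType) (D : nat) (a b c : nat -> nat)
    (theta : R) (sigma : nat -> R) : Prop :=
  sigma 0%N = 1 /\
  forall i : nat, (i <= D.-1)%N ->
    (c i)%:R * sigma i.-1 + (a i)%:R * sigma i + (b i)%:R * sigma i.+1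
      = theta * sigma i.

Definition is_pseudo_cosine (R : realType) (D : nat) (a b c : nat -> nat)
    (sigma : nat -> R) : Prop :=
  exists theta : R, pseudo_cosine D a b c theta sigma.

Definition nontrivial (R : realType) (sigma : nat -> R) : Prop := sigma 1%N <> 1.

Definition tight_pair (R : realType) (D : nat) (a b c : nat -> nat)
    (sigma rho : nat -> R) : Prop :=
  [/\ is_pseudo_cosine D a b c sigma, is_pseudo_cosine D a b c rho &
      is_pseudo_cosine D a b c (fun i => sigma i * rho i)].

Definition auxiliary_parameter (R : realType) (D : nat)
    (sigma rho : nat -> R) (eps : R) : Prop :=
  forall i : nat, (1 <= i <= D)%N ->
    sigma i * rho i - sigma i.-1 * rho i.-1
      = eps * (sigma i.-1 * rho i - sigma i * rho i.-1).

(* Main.v *)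
Require Import Defs.
From HB Require Import structures.
From mathcomp Require Import all_boot all_order all_algebra.
From mathcomp Require Import reals.
From mathcomp Require Import ring lra zify.
Import Order.TTheory GRing.Theory Num.Theory.
Set Implicit Arguments. Unset Strict Implicit.

Lemma withinS (T : finType) (adj : rel T) n x y :
  within adj n.+1 x y = within adj n x y || [exists z, adj x z && within adj n z y].
Proof. by []. Qed.

Lemma within_mono (T : finType) (adj : rel T) n x y :
  within adj n x y -> within adj n.+1 x y.
Proof. by move=> h; rewrite withinS h. Qed.

Lemma within_monoW (T : finType) (adj : rel T) n m x y :
  n <= m -> within adj n x y -> within adj m x y.
Proof.
elim: m => [|m IH]; first by rewrite leqn0 => /eqP ->.
rewrite leq_eqVlt ltnS => /orP [/eqP -> //| /IH h /h]; exact: within_mono.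
Qed.

Lemma within_snoc (T : finType) (adj : rel T) n x z y :
  within adj n x z -> adj z y -> within adj n.+1 x y.
Proof.
elim: n x => [|n IH] x.
  move=> /= /eqP -> hzy; apply/orP; right; apply/existsP; exists y.
  by rewrite hzy eqxx.
rewrite withinS => /orP [h|/existsP [w /andP [hxw hw]]] hzy.
  by apply: within_mono; apply: IH h hzy.
rewrite withinS; apply/orP; right; apply/existsP; exists w.
by rewrite hxw (IH w hw hzy).
Qed.

Lemma within_rev (T : finType) (adj : rel T) n x y :
  within adj n.+1 x y -> within adj n x y \/ exists z, within adj n x z /\ adj z y.
Proof.
elim: n x => [|n IH] x.
  rewrite withinS => /orP [h|/existsP [z /andP [hxz /eqP hz]]]; first by left.
  by right; exists x; rewrite /= eqxx -hz.
rewrite withinS => /orP [h|/existsP [w /andP [hxw hw]]].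
  case: (IH x h) => [h1|[z [hz hzy]]]; first by left; apply: within_mono.
  by right; exists z; split => //; apply: within_mono.
case: (IH w hw) => [h1|[z [hz hzy]]].
  by left; rewrite withinS; apply/orP; right; apply/existsP; exists w; rewrite hxw.
right; exists z; split => //.
by rewrite withinS; apply/orP; right; apply/existsP; exists w; rewrite hxw.
Qed.

Lemma withinS_rev (T : finType) (adj : rel T) n x y :
  within adj n.+1 x y = within adj n x y || [exists z, within adj n x z && adj z y].
Proof.
apply/idP/idP.
  case/within_rev => [->//|[z [hz hzy]]]; apply/orP; right; apply/existsP.
  by exists z; rewrite hz.
case/orP => [/within_mono //|/existsP [z /andP [hz hzy]]].
exact: within_snoc hz hzy.
Qed.

Lemma within_stable (T : finType) (adj : rel T) n x :
  (forall y, within adj n.+1 x y = within adj n x y) ->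
  forall d y, within adj (n + d) x y = within adj n x y.
Proof.
move=> hs; elim=> [|d IH] y; first by rewrite addn0.
rewrite addnS withinS_rev IH.
have -> : [exists z, within adj (n + d) x z && adj z y] =
          [exists z, within adj n x z && adj z y].
  by apply: eq_existsb => z; rewrite IH.
by rewrite -withinS_rev hs.
Qed.

Lemma grow_card (T : finType) (adj : rel T) x n :
  (forall m, m < n -> exists y, within adj m.+1 x y && ~~ within adj m x y) ->
  n < #|[set y | within adj n x y]|.
Proof.
elim: n => [|n IH] h.
  by apply/card_gt0P; exists x; rewrite inE /= eqxx.
have IHn := IH (fun m hm => h m (leqW hm)).
apply: (leq_trans _ (proper_card _)); first by rewrite ltnS; exact: IHn.
apply/properP; split.
  by apply/subsetP => y; rewrite !inE; apply: within_mono.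
have [y /andP [h1 h2]] := h n (ltnSn n).
by exists y; rewrite inE.
Qed.

Lemma within_short (T : finType) (adj : rel T) x y m :
  within adj m x y -> within adj (#|T|).-1 x y.
Proof.
move=> hm.
have [hall|] := boolP [forall i : 'I_#|T|, [exists y, within adj i.+1 x y && ~~ within adj i x y]].
  exfalso.
  have H : #|T| < #|[set y | within adj #|T| x y]|.
    apply: grow_card => m' hm'; move/forallP: hall => /(_ (Ordinal hm')) /existsP [z hz].
    by exists z.
  by have := max_card [set y | within adj #|T| x y]; rewrite leqNgt H.
rewrite negb_forall => /existsP [i]; rewrite negb_exists => /forallP hi.
have hs : forall z, within adj i.+1 x z = within adj i x z.
  move=> z; apply/idP/idP; last exact: within_mono.
  by move=> h1; move: (hi z); rewrite h1 /= negbK.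
have hiT : i <= #|T|.-1 by have := ltn_ord i; lia.
case: (leqP m i) => hmi.
  exact: within_monoW hiT (within_monoW hmi hm).
have := within_stable hs (m - i) y; rewrite subnKC ?(ltnW hmi) // hm => h.
exact: within_monoW hiT (esym h).
Qed.

Lemma gdist_le (T : finType) (adj : rel T) x y n :
  within adj n x y -> gdist adj x y <= n.
Proof.
move=> h; rewrite /gdist.
case: (ltnP n #|T|) => hn.
  rewrite leqNgt; apply/negP => hlt.
  by have := before_find 0%N hlt; rewrite nth_iota // add0n h.
by apply: leq_trans (find_size _ _) _; rewrite size_iota.
Qed.

Lemma gdist_spec (T : finType) (adj : rel T) x y :
  connected_graph adj ->
  within adj (gdist adj x y) x y /\ gdist adj x y < #|T|.
Proof.
move=> conn; have [m hm] := conn x y; have h := within_short hm.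
have hT : 0 < #|T| by apply/card_gt0P; exists x.
have hhas : has (fun n => within adj n x y) (iota 0 #|T|).
  apply/hasP; exists (#|T|.-1) => //; rewrite mem_iota add0n; lia.
have hf := hhas; rewrite has_find size_iota in hf.
split => //.
by have := nth_find 0%N hhas; rewrite nth_iota // add0n.
Qed.

Lemma gdist_tri (T : finType) (adj : rel T) x y z :
  connected_graph adj -> adj y z -> gdist adj x z <= (gdist adj x y).+1.
Proof.
move=> conn hyz; apply: gdist_le; apply: within_snoc hyz.
exact: (gdist_spec x y conn).1.
Qed.

Lemma gdist0 (T : finType) (adj : rel T) x z :
  connected_graph adj -> gdist adj x z = 0 -> x = z.
Proof. by move=> conn h; have := (gdist_spec x z conn).1; rewrite h => /eqP. Qed.

Lemma gdist_down (T : finType) (adj : rel T) x y m :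
  symmetric adj -> connected_graph adj -> gdist adj x y = m.+1 ->
  exists z, adj y z /\ gdist adj x z = m.
Proof.
move=> sym conn H; have [hw _] := gdist_spec x y conn; rewrite H in hw.
case: (within_rev hw) => [h|[z [hz hzy]]].
  by have := gdist_le h; rewrite H ltnn.
exists z; split; first by rewrite sym.
have h1 := gdist_le hz; have h2 := gdist_tri x conn hzy; lia.
Qed.

Lemma deg_sum (T : finType) (adj : rel T) D a b c x y :
  distance_regular adj D a b c ->
  #|[set z | adj y z]| = (c (gdist adj x y) + a (gdist adj x y) + b (gdist adj x y))%N.
Proof.
move=> [sym irr conn _ reg]; have [hc ha hb] := reg x y.
rewrite -hc -ha -hb.
set i := gdist adj x y.
rewrite -(cardsID [set z | (gdist adj x z).+1 == i] [set z | adj y z]).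
rewrite -(cardsID [set z | gdist adj x z == i] ([set z | adj y z] :\: [set z | (gdist adj x z).+1 == i])).
rewrite -addnA; congr (_ + (_ + _)); apply: eq_card => z; rewrite !inE //.
  case hyz: (adj y z); rewrite /= ?andbF ?andbT //; case: eqP => h; rewrite /= ?andbF ?andbT //.
  by apply/eqP; lia.
case hyz: (adj y z); last by rewrite !andbF.
have h1 := gdist_tri x conn hyz.
have h2 : i <= (gdist adj x z).+1 by apply: gdist_tri; rewrite // sym.
rewrite /i andbT in h1 h2 *.
move: h1 h2; case: eqP; case: eqP; case: eqP => /=; lia.
Qed.

Definition good (D : nat) (a b c : nat -> nat) : Prop :=
  [/\ c 0%N = 0%N, a 0%N = 0%N &
      forall j, (1 <= j <= D.-1)%N ->
        [/\ (0 < c j)%N, (0 < b j)%N & (c j + a j + b j)%N = b 0%N]].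

Lemma gdist_self (T : finType) (adj : rel T) x : gdist adj x x = 0.
Proof. by apply/eqP; rewrite -leqn0; apply: (@gdist_le _ _ _ _ 0); rewrite /= eqxx. Qed.

Lemma graph_good (T : finType) (adj : rel T) D a b c :
  distance_regular adj D a b c -> 1 <= D -> good D a b c.
Proof.
move=> DR hD; have [sym irr conn diam reg] := DR.
have hT : 0 < #|T|.
  rewrite lt0n; apply/negP => /eqP h0; move: diam.
  rewrite /diameter big_pred0; first lia.
  move=> x; have : 0 < #|T| by apply/card_gt0P; exists x.
  by rewrite h0.
have [x hx] := bigop.eq_bigmax (fun x => \max_y gdist adj x y) hT.
have [w hw] := bigop.eq_bigmax (fun y => gdist adj x y) hT.
have hDw : gdist adj x w = D by rewrite -diam /diameter hx hw.
have chain : forall d, d <= D -> exists y, gdist adj x y = D - d /\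
    (D - d < D -> exists z, adj y z /\ gdist adj x z = (D - d).+1).
  elim => [_|d IH hd].
    by exists w; rewrite subn0; split => //; rewrite ltnn.
  have [y [hy _]] := IH (ltnW hd).
  have : gdist adj x y = (D - d.+1).+1 by rewrite hy; lia.
  move=> /(gdist_down sym conn) [z [hyz hz]].
  exists z; split => // _; exists y; split; first by rewrite sym.
  by rewrite hy; lia.
have [hc0 ha0 hb0] := reg x x; rewrite /= gdist_self in hc0 ha0 hb0.
have c0 : c 0 = 0.
  rewrite -hc0; apply/eqP; rewrite cards_eq0; apply/eqP/setP => z.
  by rewrite !inE andbF.
have a0 : a 0 = 0.
  rewrite -ha0; apply/eqP; rewrite cards_eq0; apply/eqP/setP => z.
  rewrite !inE; apply/negbTE/negP => /andP [hxz /eqP /(gdist0 conn) hz].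
  by rewrite -hz irr in hxz.
split => // j /andP [hj1 hj2].
have [y [hy hz]] := chain (D - j) ltac:(lia).
have hyj : gdist adj x y = j by rewrite hy; lia.
have [z [hyz hzj]] := hz ltac:(lia).
rewrite subKn in hzj; last lia.
have [hc ha hb] := reg x y; rewrite /= hyj in hc ha hb.
split.
- rewrite -hc; have : gdist adj x y = j.-1.+1 by rewrite hyj; lia.
  move=> /(gdist_down sym conn) [z' [hyz' hz']].
  by apply/card_gt0P; exists z'; rewrite inE hyz' hz' /= prednK ?eqxx //; lia.
- by rewrite -hb; apply/card_gt0P; exists z; rewrite inE hyz hzj eqxx.
- have := deg_sum x y DR; have := deg_sum y y DR.
  by rewrite gdist_self hyj c0 a0 => -> .
Qed.

Local Open Scope ring_scope.
Lemma alg_diff (F : comRingType) (c a b k s1 r1 sp rp u v : F) :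
  c*sp + a*u + b*u = k*s1*u -> c*rp + a*v + b*v = k*r1*v ->
  c*(sp*rp) + a*(u*v) + b*(u*v) = k*(s1*r1)*(u*v) -> c + a + b = k ->
  u*v*k*(s1-1)*(r1-1)*(k-c) = 0.
Proof.
move=> hs hr ht hk; subst k.
have -> : u*v*(c+a+b)*(s1-1)*(r1-1)*((c+a+b)-c) =
  c*(c*(sp*rp) + a*(u*v) + b*(u*v) - (c+a+b)*(s1*r1)*(u*v))
  - (c*sp + a*u + b*u - (c+a+b)*s1*u)*(c*rp + a*v + b*v - (c+a+b)*r1*v)
  - (c*sp + a*u + b*u - (c+a+b)*s1*u)*(c+(c+a+b)*(r1-1))*v
  - (c*rp + a*v + b*v - (c+a+b)*r1*v)*(c+(c+a+b)*(s1-1))*u by ring.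
rewrite hs hr ht; ring.
Qed.

Lemma pc_rec (R : realType) D a b c (x : nat -> R) :
  good D a b c -> is_pseudo_cosine D a b c x ->
  x 0%N = 1 /\ forall i, (i <= D.-1)%N ->
    (c i)%:R * x i.-1 + (a i)%:R * x i + (b i)%:R * x i.+1
      = (b 0%N)%:R * x 1%N * x i.
Proof.
move=> [hc0 ha0 _] [th [x0 hx]]; split => // i hi.
have := hx 0%N (leq0n _); rewrite /= hc0 ha0 x0 !mul0r !add0r mulr1 => ->.
exact: hx.
Qed.

Lemma zero_lem (R : realType) D a b c (x : nat -> R) :
  good D a b c -> is_pseudo_cosine D a b c x ->
  forall j, (1 <= j <= D)%N -> x j.-1 = 0 -> x j = 0 -> False.
Proof.
move=> G px; have [x0 hx] := pc_rec G px; have [_ _ hG] := G.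
elim=> [|j IH] //.
case: j IH => [|j] IH hj /= h0 h1.
  by move: h0; rewrite x0; apply/eqP; rewrite oner_eq0.
have [cp _ _] : [/\ (0 < c j.+1)%N, (0 < b j.+1)%N & _] := hG j.+1 ltac:(lia).
have := hx j.+1 ltac:(lia); rewrite /= h0 h1 !mulr0 !addr0 => /eqP.
rewrite mulf_eq0 pnatr_eq0 => /orP [/eqP hc|/eqP hj0]; first lia.
by apply: IH => //; lia.
Qed.

Lemma eps1_contra (R : realType) D a b c (s r : nat -> R) :
  good D a b c -> (3 <= D)%N -> a 1%N <> 0%N ->
  is_pseudo_cosine D a b c s -> is_pseudo_cosine D a b c r -> s 1%N <> 1 ->
  (forall i, (1 <= i <= D)%N -> (s i - s i.-1) * (r i + r i.-1) = 0) -> False.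
Proof.
move=> G hD ha1 ps pr ns H.
have [s0 hs] := pc_rec G ps; have [r0 hr] := pc_rec G pr; have [_ _ hG] := G.
have [c1p b1p K1] := hG 1%N ltac:(lia).
have [c2p b2p K2] := hG 2%N ltac:(lia).
have K1r : (c 1%N)%:R + (a 1%N)%:R + (b 1%N)%:R = (b 0%N)%:R :> R by rewrite -!natrD K1.
have K2r : (c 2%N)%:R + (a 2%N)%:R + (b 2%N)%:R = (b 0%N)%:R :> R by rewrite -!natrD K2.
have a1p : 0 < (a 1%N)%:R :> R by rewrite ltr0n; lia.
have c1r : 0 < (c 1%N)%:R :> R by rewrite ltr0n.
have c2r : 0 < (c 2%N)%:R :> R by rewrite ltr0n.
have b1r : 0 < (b 1%N)%:R :> R by rewrite ltr0n.
have b2r : 0 < (b 2%N)%:R :> R by rewrite ltr0n.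
have a2r : 0 <= (a 2%N)%:R :> R by rewrite ler0n.
move: K1r K2r a1p c1r c2r b1r b2r a2r.
set k := (b 0%N)%:R; set c1 := (c 1%N)%:R; set c2 := (c 2%N)%:R;
set a1 := (a 1%N)%:R; set a2 := (a 2%N)%:R; set b1 := (b 1%N)%:R; set b2 := (b 2%N)%:R.
move=> K1r K2r a1p c1r c2r b1r b2r a2r.
have e1 := H 1%N ltac:(lia); have e2 := H 2%N ltac:(lia); have e3 := H 3%N ltac:(lia).
rewrite /= s0 r0 in e1 e2 e3.
have r1 : r 1%N = -1.
  move/eqP: e1; rewrite mulf_eq0 => /orP [|]; rewrite ?subr_eq0 ?addr_eq0 => /eqP //.
have hr1 := hr 1%N ltac:(lia); have hr2 := hr 2%N ltac:(lia).
have hs1 := hs 1%N ltac:(lia); have hs2 := hs 2%N ltac:(lia).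
rewrite /= r0 r1 s0 in hr1 hr2 hs1 hs2.
rewrite -/k -/c1 -/a1 -/b1 -/c2 -/a2 -/b2 in hr1 hr2 hs1 hs2.
have hb : b1 * r 2%N = 2 * a1 + b1 by nra.
have r2n : r 2%N + r 1%N != 0.
  rewrite r1; apply/eqP => h2.
  have : r 2%N = 1 by lra.
  move=> h; rewrite h in hb; have : (0:R) < 0 by lra.
  by rewrite ltxx.
have s21 : s 2%N = s 1%N.
  by move/eqP: e2; rewrite mulf_eq0 (negbTE r2n) orbF subr_eq0 => /eqP.
rewrite s21 in hs1 hs2 e3.
have hcs : c1 + k * s 1%N = 0.
  have : (s 1%N - 1) * (c1 + k * s 1%N) = 0 by nra.
  move/eqP; rewrite mulf_eq0 subr_eq0 => /orP [/eqP //|/eqP //].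
have sn0 : s 1%N != 0.
  apply/eqP => h; rewrite h in hcs; have : (0:R) < 0 by lra.
  by rewrite ltxx.
have s3n : s 3%N - s 1%N != 0.
  apply/eqP => h3; have h3' : s 3%N = s 1%N by lra.
  rewrite h3' in hs2.
  have : (c2 + a2 + b2 + c1) * s 1%N = 0 by nra.
  move/eqP; rewrite mulf_eq0 (negbTE sn0) orbF => /eqP ?.
  have : (0:R) < 0 by lra.
  by rewrite ltxx.
have r3 : r 3%N = - r 2%N.
  by move/eqP: e3; rewrite mulf_eq0 (negbTE s3n) /= addr_eq0 => /eqP.
rewrite r3 in hr2.
have h4 : (2 * a2 + c2) * r 2%N = c2 by nra.
have h5 : (2 * a1 + b1) * (2 * a2 + c2) = b1 * c2.
  transitivity (b1 * ((2 * a2 + c2) * r 2%N)); last by rewrite h4.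
  rewrite -hb; ring.
have : (0:R) < 0 by nra.
by rewrite ltxx.
Qed.

Lemma diff_lem (R : realType) D a b c (s r t : nat -> R) (e : R) :
  good D a b c -> is_pseudo_cosine D a b c s -> is_pseudo_cosine D a b c r ->
  is_pseudo_cosine D a b c t -> (forall i, t i = s i * r i) ->
  s 1%N <> 1 -> r 1%N <> 1 -> e <> 1 ->
  (forall i, (1 <= i <= D)%N ->
     s i * r i - s i.-1 * r i.-1 = e * (s i.-1 * r i - s i * r i.-1)) ->
  forall i, (1 <= i <= D)%N -> s i.-1 <> s i.
Proof.
move=> G ps pr pt ht ns nr ne aux.
have [s0 hs] := pc_rec G ps; have [r0 hr] := pc_rec G pr.
have [t0 htr] := pc_rec G pt; have [_ _ hG] := G.
case=> [|[|j]] hi //=.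
  by move=> h; apply: ns; rewrite -h s0.
move=> heq.
have := aux j.+2 hi; rewrite /= -heq => h.
have : (1 - e) * (s j.+1 * (r j.+2 - r j.+1)) = 0.
  transitivity ((s j.+1 * r j.+2 - s j.+1 * r j.+1) - e * (s j.+1 * r j.+2 - s j.+1 * r j.+1)); first ring.
  by rewrite {1}h subrr.
move/eqP; rewrite !mulf_eq0 subr_eq0 => /orP [/eqP h1|/orP [/eqP hu|]].
- by apply: ne; rewrite h1.
- by apply: (zero_lem G ps (j := j.+2)) => //=; rewrite -heq.
rewrite subr_eq0 => /eqP heqr.
have [/eqP hu0|hu] := boolP (s j.+1 == 0).
  by apply: (zero_lem G ps (j := j.+2)) => //=; rewrite -heq.
have [/eqP hv|hv] := boolP (r j.+1 == 0).
  by apply: (zero_lem G pr (j := j.+2)) => //=; rewrite heqr.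
have [cp bp K] := hG j.+1 ltac:(lia).
have hs1 := hs j.+1 ltac:(lia); have hr1 := hr j.+1 ltac:(lia).
have ht1 := htr j.+1 ltac:(lia).
rewrite /= !ht -heq heqr in ht1; rewrite /= -heq in hs1; rewrite /= heqr in hr1.
have Kr : (c j.+1)%:R + (a j.+1)%:R + (b j.+1)%:R = (b 0%N)%:R :> R by rewrite -!natrD K.
have := alg_diff hs1 hr1 ht1 Kr.
move/eqP; rewrite !mulf_eq0 => /orP[/orP[/orP[/orP[/orP[hu'|hv']|hk]|hP]|hQ]|hW].
- by rewrite hu' in hu.
- by rewrite hv' in hv.
- by move: hk; rewrite pnatr_eq0; lia.
- by apply: ns; apply/eqP; rewrite -subr_eq0.
- by apply: nr; apply/eqP; rewrite -subr_eq0.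
- move: hW; rewrite -Kr.
  have -> : (c j.+1)%:R + (a j.+1)%:R + (b j.+1)%:R - (c j.+1)%:R = ((a j.+1 + b j.+1)%N)%:R :> R.
    by rewrite natrD; ring.
  by rewrite pnatr_eq0; lia.
Qed.

Unset Implicit Arguments.

Theorem corollary8p6 (R : realType) (T : finType) (adj : rel T) (D : nat)
    (a b c : nat -> nat) (sigma rho : nat -> R) (eps : R) :
  distance_regular adj D a b c ->
  (3 <= D)%N ->
  a 1%N <> 0%N ->
  nontrivial sigma -> nontrivial rho ->
  tight_pair D a b c sigma rho ->
  auxiliary_parameter D sigma rho eps ->
  [/\ eps <> 1, eps <> -1 &
      forall i : nat, (1 <= i <= D)%N ->
        sigma i.-1 <> sigma i /\ rho i.-1 <> rho i].
Proof.
move=> hDR hD ha1 nts ntr [ps pr pt] aux.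
have G := graph_good hDR (leq_trans (isT : (1 <= 3)%N) hD).
have e1 : eps <> 1.
  move=> he; subst eps.
  apply: (eps1_contra G hD ha1 ps pr nts) => i hi.
  have := aux i hi; rewrite mul1r => h.
  transitivity ((sigma i * rho i - sigma i.-1 * rho i.-1)
                - (sigma i.-1 * rho i - sigma i * rho i.-1)); first ring.
  by rewrite h subrr.
have e2 : eps <> -1.
  move=> he; subst eps.
  apply: (eps1_contra G hD ha1 pr ps ntr) => i hi.
  have := aux i hi => h.
  transitivity ((sigma i * rho i - sigma i.-1 * rho i.-1)
                + (sigma i.-1 * rho i - sigma i * rho i.-1)); first ring.
  rewrite h; ring.
split => // i hi; split.
  by apply: (diff_lem G ps pr pt (fun i => erefl) nts ntr e1 aux).
apply: (diff_lem (t := fun i => sigma i * rho i) (e := - eps) G pr ps pt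
          (fun i => mulrC _ _) ntr nts) => //.
  by move=> h; apply: e2; rewrite -h opprK.
move=> j hj; rewrite (mulrC (rho j)) (mulrC (rho j.-1)) aux //; ring.
Qed.
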